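(* Let $k\ge2$ be an integer. Then for all $n\in\mathbb Z$, $L_k^{(n)}L_k^{(-n)}=H$, where $H=(L_k^{(0)})^2$.
   Context: Fix an integer $k\ge2$. Let $Q_k$ be the $k\times k$ matrix whose first row is all ones, with $(Q_k)_{i+1,i}=1$ for $1\le i\le k-1$ and all other entries $0$, and for $r\in\mathbb Z$ let $Q_k^r$ denote its $r$-th power. The generalized Lucas sequence of order $k$, $(l_{k,n})_{n\in\mathbb Z}$, is the two-sided sequence satisfying $l_{k,n+k}=l_{k,n+k-1}+\dots+l_{k,n}$ for all $n\in\mathbb Z$ with initial values $l_{k,r}=\operatorname{trace}(Q_k^r)$ for $0\le r\le k-1$ (so $l_{k,0}=k$ and $l_{k,r}=2^r-1$ for $1\le r\le k-1$). For $n\in\mathbb Z$ the generalized Lucas matrix $L_k^{(n)}$ is the $k\times k$ matrix with entries $(L_k^{(n)})_{i,1}=l_{k,k+n-i}$ and $(L_k^{(n)})_{i,j}=\sum_{m=n-i+j-1}^{k+n-i-1} l_{k,m}$ for $2\le j\le k$, $1\le i\le k$. *)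

(* Defs.v *)
From HB Require Import structures.
From mathcomp Require Import all_boot all_order all_algebra.
Set Implicit Arguments. Unset Strict Implicit. Unset Printing Implicit Defensive.
Import Order.TTheory GRing.Theory Num.Theory.
Local Open Scope ring_scope.

Definition Qmat (k : nat) : 'M[int]_k :=
  \matrix_(i < k, j < k) (if (i == 0%N :> nat) then 1
                          else if (i == j.+1 :> nat) then 1 else 0).

Definition is_gen_lucas (k : nat) (l : int -> int) : Prop :=
  (forall n : int, l (n + k%:Z) = \sum_(t < k) l (n + t%:Z)) /\
  (forall r : nat, (r < k)%N -> l r%:Z = \tr (Qmat k ^+ r)).

(* Generalized Lucas matrix L_k^(n), 0-based: row i0 = i-1, column j0 = j-1.
   (L)_{i,1} = l(k+n-i);  (L)_{i,j} = sum_{m=n-i+j-1}^{k+n-i-1} l(m) for j >= 2. *)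
Definition lucas_mx (k : nat) (l : int -> int) (n : int) : 'M[int]_k :=
  \matrix_(i < k, j < k)
    (if (j == 0%N :> nat) then l (k%:Z + n - (i%:Z + 1))
     else \sum_(t < k - j) l (n - (i%:Z + 1) + (j%:Z + 1) - 1 + t%:Z)).

(* Main.v *)
Require Import Defs.
From HB Require Import structures.
From mathcomp Require Import all_boot all_order all_algebra.
From mathcomp Require Import zify ring.
Import Order.TTheory GRing.Theory Num.Theory.
Local Open Scope ring_scope.

Lemma sum_if1 (K a : nat) (F : nat -> int) :
  \sum_(r < K) (if (r == a :> nat) then F r else 0) = if (a < K)%N then F a else 0.
Proof.
case: (ltnP a K) => H.
  rewrite -big_mkcond /= (big_pred1 (Ordinal H)) //.
rewrite big1 // => r _; rewrite ltn_eqF //; exact: (leq_trans (ltn_ord r) H).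
Qed.

Section S.
Variable K : nat.
Variable l : int -> int.
Hypothesis rec : forall n : int, l (n + K%:Z) = \sum_(t < K) l (n + t%:Z).

Definition h (p : int) (j : nat) := \sum_(t < K - j) l (p + j%:Z + t%:Z).

Lemma rec' x : \sum_(r < K) l (x - (r%:Z + 1)) = l x.
Proof.
have := rec (x - K%:Z). rewrite (reindex_inj rev_ord_inj) /=.
have -> : x - K%:Z + K%:Z = x by ring.
move=> ->; apply: eq_bigr => r _; congr l.
have := ltn_ord r; lia.
Qed.

Lemma lucasE m (i j : 'I_K) : lucas_mx K l m i j = h (m - (i%:Z + 1)) j.
Proof.
rewrite /lucas_mx mxE /h; case: eqP => [j0|_].
  rewrite j0 subn0 -rec; congr l; ring.
by apply: eq_bigr => t _; congr l; ring.
Qed.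

Lemma hK p j : (K <= j)%N -> h p j = 0.
Proof. move=> H; rewrite /h; have -> : (K - j = 0)%N by lia.
by rewrite big_ord0. Qed.

Lemma h0 p : h p 0 = l (p + K%:Z).
Proof. by rewrite rec /h subn0; apply: eq_bigr => t _; congr l; ring. Qed.

Lemma hS p j : (j < K)%N -> h (p + 1) j = h p j.+1 + h p 0.
Proof.
move=> H; rewrite h0 /h.
have -> : (K - j = (K - j.+1).+1)%N by lia.
rewrite big_ord_recr /=; congr (_ + _).
  apply: eq_bigr => t _; congr l; lia.
congr l; lia.
Qed.

Lemma LQ m : lucas_mx K l m *m Qmat K = lucas_mx K l (m + 1).
Proof.
apply/matrixP => i j; rewrite [LHS]mxE lucasE.
have -> : m + 1 - (i%:Z + 1) = (m - (i%:Z + 1)) + 1 by ring.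
rewrite hS //.
transitivity (\sum_(r < K) ((if (r == 0%N :> nat) then h (m - (i%:Z + 1)) r else 0)
   + (if (r == j.+1 :> nat) then h (m - (i%:Z + 1)) r else 0))).
  apply: eq_bigr => r _; rewrite lucasE [Qmat _ _ _]mxE.
  case: eqP => [->|_]; first by rewrite mulr1 addr0.
  by case: eqP => _; rewrite ?mulr1 ?mulr0 ?add0r.
rewrite big_split /= !sum_if1.
have K0 : (0 < K)%N by have := ltn_ord i; lia.
rewrite K0 addrC; congr (_ + _).
by case: ltnP => // H; rewrite hK.
Qed.

Lemma QL m : Qmat K *m lucas_mx K l m = lucas_mx K l (m + 1).
Proof.
apply/matrixP => i j; rewrite [LHS]mxE lucasE.
case: (eqVneq (i : nat) 0%N) => i0.
  transitivity (\sum_(r < K) h (m - (r%:Z + 1)) j).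
    by apply: eq_bigr => r _; rewrite lucasE [Qmat _ _ _]mxE i0 /= mul1r.
  rewrite /h exchange_big /=.
  rewrite i0 /=.
  apply: eq_bigr => t _.
  rewrite -rec'; apply: eq_bigr => r _; congr l; ring.
transitivity (\sum_(r < K) (if (r == i.-1 :> nat) then h (m - (r%:Z + 1)) j else 0)).
  apply: eq_bigr => r _; rewrite lucasE [Qmat _ _ _]mxE.
  rewrite (negbTE i0).
  case: (eqVneq (i:nat) r.+1) => e.
      by rewrite e /= eqxx; ring.
  case: eqP => e'; last by ring. case/eqP: e; have := ltn_ord i; lia.
rewrite (sum_if1 K i.-1 (fun r => h (m - (r%:Z + 1)) j)) /=.
have -> : (i.-1 < K)%N by have := ltn_ord i; lia.
congr h; lia.
Qed.

End S.

Theorem theorem6 (k : nat) (l : int -> int) :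
  (2 <= k)%N -> is_gen_lucas k l ->
  forall n : int,
    lucas_mx k l n *m lucas_mx k l (- n) = lucas_mx k l 0 *m lucas_mx k l 0.
Proof.
move=> _ [rec _].
pose f n := lucas_mx k l n *m lucas_mx k l (- n).
have step n : f (n + 1) = f n.
  rewrite /f -LQ // -mulmxA; congr (_ *m _).
  by rewrite QL //; congr lucas_mx; ring.
have pos (m : nat) : f m%:Z = f 0.
  elim: m => // m IH; rewrite -IH -(step m%:Z); congr f; lia.
have neg (m : nat) : f (- m%:Z) = f 0.
  elim: m => [|m IH]; first by rewrite oppr0.
  rewrite -IH -(step (- (m.+1)%:Z)); congr f; lia.
move=> n; case: n => m.
  exact: pos.
by rewrite NegzE; exact: neg.
Qed.
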